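(* Let $A \in M_n(\mathbb{C})$ be a normal matrix (i.e. $AA^*=A^*A$) which is $r_A$-row regular. Then $A$ is also $r_A$-column regular; in particular, $A$ is a semimagic square.
   Context: An $n\times n$ complex matrix $A=(a_{ij})$ is $r_A$-row regular if $\sum_{j=1}^n a_{ij}=r_A$ for every row $i$, and $c_A$-column regular if $\sum_{i=1}^n a_{ij}=c_A$ for every column $j$. A semimagic square is a matrix that is both $r_A$-row regular and $c_A$-column regular with $r_A=c_A$. $A^*$ denotes the conjugate transpose. *)

(* Defs.v *)
From HB Require Import structures.
From mathcomp Require Import all_boot all_order all_algebra.
From mathcomp Require Import complex.
From mathcomp Require Import reals.
Set Implicit Arguments. Unset Strict Implicit. Unset Printing Implicit Defensive.
Import Order.TTheory GRing.Theory Num.Theory.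
Local Open Scope ring_scope.

Definition conjT (C : numClosedFieldType) (m n : nat) (A : 'M[C]_(m, n)) : 'M[C]_(n, m) :=
  \matrix_(i < n, j < m) (A j i)^*.

Definition normal_mx (C : numClosedFieldType) (n : nat) (A : 'M[C]_n) : Prop :=
  A *m conjT A = conjT A *m A.

Definition row_regular (C : numClosedFieldType) (n : nat) (A : 'M[C]_n) (r : C) : Prop :=
  forall i : 'I_n, \sum_(j < n) A i j = r.

Definition col_regular (C : numClosedFieldType) (n : nat) (A : 'M[C]_n) (c : C) : Prop :=
  forall j : 'I_n, \sum_(i < n) A i j = c.

Definition semimagic (C : numClosedFieldType) (n : nat) (A : 'M[C]_n) : Prop :=
  exists r : C, row_regular A r /\ col_regular A r.

(* Main.v *)
Require Import Defs.
From HB Require Import structures.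
From mathcomp Require Import all_boot all_order all_algebra.
From mathcomp Require Import complex.
From mathcomp Require Import reals.
Import Order.TTheory GRing.Theory Num.Theory.
Local Open Scope ring_scope.

Section H.
Variable C : numClosedFieldType.

Lemma conjT_mul m n p (X : 'M[C]_(m, n)) (Y : 'M[C]_(n, p)) :
  conjT (X *m Y) = conjT Y *m conjT X.
Proof.
apply/matrixP => i j; rewrite !mxE rmorph_sum; apply: eq_bigr => k _.
by rewrite !mxE rmorphM mulrC.
Qed.

Lemma conjTK m n (X : 'M[C]_(m, n)) : conjT (conjT X) = X.
Proof. by apply/matrixP => i j; rewrite !mxE conjCK. Qed.

Lemma conjTB n (X : 'M[C]_n) (r : C) :
  conjT (X - r%:M) = conjT X - (r^*)%:M.
Proof.
apply/matrixP => i j; rewrite !mxE rmorphB /=; congr (_ - _).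
by rewrite eq_sym rmorphMn.
Qed.

Lemma normal_shift n (X : 'M[C]_n) (r : C) :
  normal_mx X -> normal_mx (X - r%:M).
Proof.
rewrite /normal_mx conjTB => HX.
rewrite !mulmxBl !mulmxBr HX !mul_mx_scalar !mul_scalar_mx !scale_scalar_mx.
rewrite !opprB !addrA (mulrC r) -!addrA; congr (_ + _). by rewrite addrCA [RHS]addrCA; congr (_ + _); rewrite addrC.
Qed.

Lemma cV_eq0 m (w : 'cV[C]_m) : (conjT w *m w) 0 0 = 0 -> w = 0.
Proof.
rewrite !mxE => H; apply/matrixP => i j; rewrite ord1 mxE.
have Hs : \sum_(k < m) `|w k 0| ^+ 2 = 0.
  by rewrite -[RHS]H; apply: eq_bigr => k _; rewrite normCKC mxE.
have := psumr_eq0P (P := predT) (fun k _ => exprn_ge0 2 (normr_ge0 (w k 0))) Hs (i := i) isT.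
by move/eqP; rewrite expf_eq0 /= normr_eq0 => /eqP.
Qed.
End H.

Theorem mainTheorem2 (R : realType) (n : nat) (A : 'M[R[i]]_n) (rA : R[i]) :
  normal_mx A -> row_regular A rA -> col_regular A rA /\ semimagic A.
Proof.
move=> HN HR.
set B := A - rA%:M.
set v : 'cV[R[i]]_n := const_mx 1.
have Bv : B *m v = 0.
  apply/matrixP => i j; rewrite !mxE.
  under eq_bigr do rewrite !mxE mulr1.
  rewrite sumrB HR (bigD1 i) //= eqxx mulr1n big1 ?addr0 ?subrr //.
  by move=> k /negbTE; rewrite eq_sym => ->; rewrite mulr0n.
have NB : normal_mx B := @normal_shift _ n A rA HN.
have w0 : conjT B *m v = 0.
  apply: cV_eq0; rewrite conjT_mul conjTK mulmxA -[_ *m _ *m conjT B]mulmxA.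
  by rewrite NB mulmxA -mulmxA Bv mulmx0 mxE.
have HC : col_regular A rA.
  move=> j; have := congr1 (fun M : 'cV[R[i]]_n => (M j 0)^*) w0.
  rewrite /= !mxE conjC0 rmorph_sum /=.
  under eq_bigr do rewrite !mxE mulr1 conjCK.
  rewrite sumrB.
  have -> : \sum_(i < n) rA *+ (i == j) = rA.
    rewrite (bigD1 j) //= eqxx mulr1n big1 ?addr0 //.
    by move=> k /negbTE ->; rewrite mulr0n.
  by move=> H; apply/eqP; rewrite -subr_eq0 H.
split; first exact: HC.
exists rA; split; [exact: HR | exact: HC].
Qed.
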